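(* Suppose $B:\mathcal{F}\otimes\mathcal{F}\to\mathbb{Z}$ is a bilinear form such that: (1) if $w_0\in\mathcal{M}_{n_0}^{e_0}$, $w_1\in\mathcal{M}_{n_1}^{e_1}$ with $(n_0,e_0)\ne(n_1,e_1)$ then $B(w_0,w_1)=0$; (2) for all words $w_0,w_1$: $B(a_{x,i}w_0,w_1)=B(w_0,a^*_{x,i}w_1)$ for $0\le i\le n_x(w_0)$, and $B(w_0,a_{y,i}w_1)=B(a^*_{y,i}w_0,w_1)$ for $0\le i\le n_y(w_1)$ (with $B(0,\cdot)=B(\cdot,0)=0$ when a terminal annihilation gives $0$); (3) $B(1,1)=1$. Then $B=\langle\cdot|\cdot\rangle$.
   Context: $\mathcal{M}$ is the free monoid of words in $x,y$ (empty word $1$), $\mathcal{F}$ its $\mathbb{Z}$-span; $\mathcal{M}_n^e$ is the set of words with $n_x$ $x$'s and $n_y$ $y$'s where $n=n_x+n_y$, $e=n_y-n_x$; $n_s(w)$ is the number of letters $s$ in $w$. Operators on a word $w$ (extended linearly): $a_{s,0}w$ deletes the initial letter if it is $s$, else $0$; $a_{s,i}w$ ($1\le i\le n_s(w)$) deletes the $i$-th $s$; $a_{s,n_s+1}w$ deletes the final letter if it is $s$, else $0$; $a^*_{s,0}w$ prepends $s$; $a^*_{s,i}w$ ($1\le i\le n_s(w)$) replaces the $i$-th $s$ by $ss$; $a^*_{s,n_s+1}w$ appends $s$. $\langle w_0|w_1\rangle=1$ if $w_0,w_1$ have the same degrees and for each $i$ the $i$-th $x$ of $w_0$ is at a position $\le$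 that of the $i$-th $x$ of $w_1$; otherwise $0$; extended bilinearly. *)

(* Defs.v *)
From mathcomp Require Import all_boot all_order all_algebra.
Set Implicit Arguments. Unset Strict Implicit. Unset Printing Implicit Defensive.
Import Order.TTheory GRing.Theory Num.Theory.
Local Open Scope ring_scope.

Definition letter := bool.
Definition lx : letter := false.
Definition ly : letter := true.

Definition word := seq letter.

Definition nlet (s : letter) (w : word) : nat := count_mem s w.

Definition deg (w : word) : nat * int :=
  (size w, (nlet ly w)%:Z - (nlet lx w)%:Z).

(* delete the i-th (1-based) occurrence of s *)
Fixpoint del_occ (s : letter) (i : nat) (w : word) : word :=
  match w with
  | [::] => [::]
  | c :: t => if c == s then (if i == 1%N then t else c :: del_occ s i.-1 t)
              else c :: del_occ s i t
  end.

(* replace the i-th (1-based) occurrence of s by ss *)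
Fixpoint dup_occ (s : letter) (i : nat) (w : word) : word :=
  match w with
  | [::] => [::]
  | c :: t => if c == s then (if i == 1%N then s :: s :: t else c :: dup_occ s i.-1 t)
              else c :: dup_occ s i t
  end.

(* annihilation operator a_{s,i}; None represents the element 0 of F *)
Definition ann (s : letter) (i : nat) (w : word) : option word :=
  if i == 0%N then
    (match w with c :: t => if c == s then Some t else None | [::] => None end)
  else if (i <= nlet s w)%N then Some (del_occ s i w)
  else if i == (nlet s w).+1 then
    (match w with
     | [::] => None
     | c :: t => if last c t == s then Some (belast c t) else None end)
  else None.

(* creation operator a*_{s,i}, meaningful for 0 <= i <= n_s(w)+1 *)
Definition cre (s : letter) (i : nat) (w : word) : word :=
  if i == 0%N then s :: w
  else if (i <= nlet s w)%N then dup_occ s i w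
  else rcons w s.

Definition positions (s : letter) (w : word) : seq nat :=
  [seq k <- iota 0 (size w) | nth lx w k == s].

Definition pairing (w0 w1 : word) : int :=
  if [&& deg w0 == deg w1 & all2 (fun p q => p <= q)%N (positions lx w0) (positions lx w1)]
  then 1 else 0.

Definition evl (B : word -> word -> int) (o : option word) (w1 : word) : int :=
  if o is Some w then B w w1 else 0.
Definition evr (B : word -> word -> int) (w0 : word) (o : option word) : int :=
  if o is Some w then B w0 w else 0.

(* Main.v *)
Require Import Defs.
From mathcomp Require Import all_boot all_order all_algebra zify.
From Stdlib Require Import Classical.
Set Implicit Arguments. Unset Strict Implicit. Unset Printing Implicit Defensive.

Lemma pos_cat s u w : positions s (u ++ w) =
  positions s u ++ map (addn (size u)) (positions s w).
Proof.
rewrite /positions size_cat iotaD filter_cat add0n; congr (_ ++ _).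
  apply: eq_in_filter => k; rewrite mem_iota add0n => /andP[_ hk].
  by rewrite nth_cat hk.
rewrite -[size u]addn0 iotaDl addn0 filter_map; congr (map _ _).
apply: eq_filter => k /=; by rewrite nth_cat ltnNge leq_addr /= addKn.
Qed.

Lemma pos1 s c : positions s [:: c] = if c == s then [:: 0] else [::].
Proof. by rewrite /positions /=; case: (c == s). Qed.

Lemma pos_cons s c w : positions s (c :: w) =
  (if c == s then [:: 0] else [::]) ++ map (addn 1) (positions s w).
Proof. by rewrite -cat1s pos_cat pos1. Qed.

Lemma size_pos s w : size (positions s w) = nlet s w.
Proof.
elim: w => [//|c w IH]; rewrite pos_cons size_cat size_map IH /nlet /=.
by case: (c == s).
Qed.

Lemma sorted_pos s w : sorted ltn (positions s w).
Proof. apply: sorted_filter; [exact: ltn_trans| exact: iota_ltn_sorted]. Qed.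

Lemma nlet_take s w k : nlet s (take k w) = count (fun p => p < k) (positions s w).
Proof.
elim: w k => [|c w IH] k; first by case: k.
case: k => [|k].
  rewrite take0 /nlet /= pos_cons count_cat count_map.
  by rewrite (@eq_count _ _ pred0) ?count_pred0; case: (c == s).
rewrite /= pos_cons count_cat count_map /nlet /= -/(nlet s _) IH.
by case: (c == s).
Qed.


Lemma count_lt0 (k : nat) (P : seq nat) : all (fun x => k <= x) P ->
  count (fun p => p < k) P = 0.
Proof. elim: P => //= x P IH /andP[hx hP]; by rewrite IH // ltnNge hx. Qed.

Lemma all_ltn_le (k p : nat) P : k <= p -> all (ltn p) P -> all (fun x => k <= x) P.
Proof. move=> hk /allP hP; apply/allP => x /hP /= hx; lia. Qed.

Lemma char_pure (P Q : seq nat) : sorted ltn P -> sorted ltn Q -> size P = size Q ->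
  all2 (fun p q => p <= q) P Q <->
  (forall k, count (fun q => q < k) Q <= count (fun p => p < k) P).
Proof.
elim: P Q => [|p P IH] [|q Q] //= sP sQ [hs].
have sP' := path_sorted sP; have sQ' := path_sorted sQ.
have mP := order_path_min ltn_trans sP; have mQ := order_path_min ltn_trans sQ.
split.
  move=> /andP[hpq /(IH Q sP' sQ' hs) H] k; have := H k.
  case: (ltnP q k) => hq; case: (ltnP p k) => hp /=; lia.
move=> H; have hpq : p <= q.
  rewrite leqNgt; apply/negP => hqp; have := H q.+1.
  have hf : (p < q.+1) = false by rewrite ltnS leqNgt hqp.
  rewrite hf (count_lt0 (@all_ltn_le q.+1 p P hqp mP)) /=; lia.
rewrite hpq /=; apply/(IH Q sP' sQ' hs) => k; have := H k.
case: (ltnP q k) => hq.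
  by rewrite (leq_ltn_trans hpq hq) /=; lia.
rewrite (count_lt0 (all_ltn_le hq mQ)) //.
Qed.

Lemma nlet_xy w : nlet lx w + nlet ly w = size w.
Proof. by elim: w => //= c w; rewrite /nlet /=; case: c => /=; lia. Qed.

Definition pairS s a b := [&& size a == size b, nlet s a == nlet s b &
  all2 (fun p q => p <= q) (positions s a) (positions s b)].

Lemma dual a b : pairS lx a b = pairS ly b a.
Proof.
rewrite /pairS eq_sym; case: eqP => //= hs.
have hxy := nlet_xy a; have hxy' := nlet_xy b.
have -> : (nlet ly b == nlet ly a) = (nlet lx a == nlet lx b) by apply/eqP/eqP; lia.
case: eqP => //= hx.
have sx : size (positions lx a) = size (positions lx b) by rewrite !size_pos.
have sy : size (positions ly b) = size (positions ly a) by rewrite !size_pos; lia.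
apply/idP/idP.
  move/(char_pure (sorted_pos _ _) (sorted_pos _ _) sx) => H.
  apply/(char_pure (sorted_pos _ _) (sorted_pos _ _) sy).
  move=> k; have := H k; rewrite -!nlet_take => h.
  have e1 := nlet_xy (take k a); have e2 := nlet_xy (take k b).
  rewrite !size_take hs in e1 e2; lia.
move/(char_pure (sorted_pos _ _) (sorted_pos _ _) sy) => H.
apply/(char_pure (sorted_pos _ _) (sorted_pos _ _) sx).
move=> k; have := H k; rewrite -!nlet_take => h.
have e1 := nlet_xy (take k a); have e2 := nlet_xy (take k b).
rewrite !size_take hs in e1 e2; lia.
Qed.


Lemma del_split s u r : del_occ s (nlet s u).+1 (u ++ s :: r) = u ++ r.
Proof.
elim: u => [|c u IH] /=; first by case: s.
rewrite /nlet /= -/(nlet s u); move: IH; case: c; case: s => /= IH; by rewrite ?add1n ?add0n IH.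
Qed.

Lemma dup_split s u r : dup_occ s (nlet s u).+1 (u ++ s :: r) = u ++ s :: s :: r.
Proof.
elim: u => [|c u IH] /=; first by case: s.
rewrite /nlet /= -/(nlet s u); move: IH; case: c; case: s => /= IH; by rewrite ?add1n ?add0n IH.
Qed.

Lemma split_occ s i w : 0 < i <= nlet s w ->
  exists u r, w = u ++ s :: r /\ nlet s u = i.-1.
Proof.
elim: w i => [|c w IH] i; first by rewrite /nlet /=; lia.
rewrite /nlet /= -/(nlet s w); case: eqP => [->|hc] /= hi.
  case: (i =P 1) => [->|hi1].
    by exists [::], w.
  have [u [r [-> hu]]] : exists u r, w = u ++ s :: r /\ nlet s u = i.-1.-1
    by apply: IH; lia.
  exists (s :: u), r; split => //; rewrite /nlet /= eqxx -/(nlet s u) hu; lia.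
have [u [r [-> hu]]] := IH i ltac:(lia).
exists (c :: u), r; split => //; rewrite /nlet /= -/(nlet s u) hu.
by case: eqP.
Qed.

Lemma all2_cat T (r : T -> T -> bool) (p1 p2 q1 q2 : seq T) : size p1 = size q1 ->
  all2 r (p1 ++ p2) (q1 ++ q2) = all2 r p1 q1 && all2 r p2 q2.
Proof. elim: p1 q1 => [|x p IH] [|y q] //= [h]; by rewrite IH // andbA. Qed.

Lemma all2_map2 T (r : T -> T -> bool) (f g : T -> T) (p q : seq T) :
  all2 r (map f p) (map g q) = all2 (fun x y => r (f x) (g y)) p q.
Proof. by elim: p q => [|x p IH] [|y q] //=; rewrite IH. Qed.

Lemma eq_all2' T (r1 r2 : T -> T -> bool) (p q : seq T) :
  (forall x y, r1 x y = r2 x y) -> all2 r1 p q = all2 r2 p q.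
Proof. by move=> h; elim: p q => [|x p IH] [|y q] //=; rewrite h IH. Qed.

Lemma size_del s i w : 0 < i <= nlet s w -> size (del_occ s i w) = (size w).-1.
Proof.
move=> hi; have [u [r [-> hu]]] := split_occ hi.
have -> : i = (nlet s u).+1 by lia.
by rewrite del_split !size_cat /= addnS.
Qed.

Lemma nlet_cat s u w : nlet s (u ++ w) = nlet s u + nlet s w.
Proof. by rewrite /nlet count_cat. Qed.

Lemma nlet_cons s c w : nlet s (c :: w) = (c == s) + nlet s w.
Proof. by rewrite /nlet /= eq_sym. Qed.

Lemma pairS_dup s i a v : 0 < i <= nlet s v -> i <= nlet s a ->
  pairS s a (dup_occ s i v) = pairS s (del_occ s i a) v.
Proof.
move=> hv ha.
have [U [R [-> hU]]] := @split_occ s i a ltac:(lia).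
have [V [R' [-> hV]]] := @split_occ s i v hv.
have hi : i = (nlet s V).+1 by lia.
have e : nlet s V = nlet s U by lia.
rewrite hi dup_split e del_split /pairS !size_cat /= !pos_cat !pos_cons eqxx /=.
rewrite !nlet_cat !nlet_cons eqxx hU hV.
have -> : (size U + (size R).+1 == size V + (size R').+2) =
          (size U + size R == size V + (size R').+1) by apply/eqP/eqP; lia.
case: eqP => //= _.
have -> : (i.-1 + (1 + nlet s R) == i.-1 + (1 + (1 + nlet s R'))) =
          (i.-1 + nlet s R == i.-1 + (1 + nlet s R')) by apply/eqP/eqP; lia.
case: eqP => //= hR.
rewrite !all2_cat ?size_pos ?hU ?hV //; congr (_ && _).
have hsz := size_pos s R.
case: (positions s R) hsz => [|h P] hsz /=; first lia.
rewrite -!map_comp !all2_map2.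
rewrite (@eq_all2' _ _ (fun x y => size U + x <= size V + (1 + y))); last first.
  by move=> x y /=; apply/idP/idP; lia.
by case: (all2 _ P _); rewrite ?andbT ?andbF //; apply/idP/idP; lia.
Qed.

Lemma pairS_rcons s a v : (nlet s v).+1 <= nlet s a ->
  pairS s a (rcons v s) = pairS s (del_occ s (nlet s v).+1 a) v.
Proof.
move=> ha.
have [U [R [-> hU]]] := @split_occ s (nlet s v).+1 a ltac:(lia).
move: hU => /= hU; rewrite -hU del_split /pairS -cats1 !size_cat /= !pos_cat !pos_cons /= eqxx.
rewrite !nlet_cat !nlet_cons eqxx /= hU.
have -> : (size U + (size R).+1 == size v + 1) =
          (size U + size R == size v) by apply/eqP/eqP; lia.
case: eqP => //= hs.
have -> : (nlet s v + (1 + nlet s R) == nlet s v + (1 + 0)) =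
          (nlet s v + nlet s R == nlet s v) by apply/eqP/eqP; lia.
case: eqP => //= hR.
have hsz := size_pos s R.
case: (positions s R) hsz => [|h P] hsz; last by move: hsz => /=; lia.
rewrite !cats0 all2_cat ?size_pos ?hU //= andbT.
have -> : size U + 0 <= size v + 0 by lia.
by rewrite andbT.
Qed.


Definition toZ (b : bool) : int := if b then 1%R else 0%R.

Lemma pairS_cons s c a b : pairS s (c :: a) (s :: b) = (c == s) && pairS s a b.
Proof.
have ss : (s == s) = true by case: s.
rewrite /pairS !nlet_cons !pos_cons /= ss.
case: (c == s) => /=.
  rewrite !add1n eqSS all2_map2.
  congr (_ && (_ && _)); apply: eq_all2' => x y; by rewrite /= leq_add2l.
case: (positions s a) => [|p P] /=; by rewrite !andbF.
Qed.

Lemma pairS_nil s b : pairS s [::] (s :: b) = false.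
Proof. by []. Qed.

Lemma size_dup s i v : 0 < i <= nlet s v -> size (dup_occ s i v) = (size v).+1.
Proof.
move=> hi; have [u [r [-> hu]]] := split_occ hi.
have -> : i = (nlet s u).+1 by lia.
by rewrite dup_split !size_cat /= addnS.
Qed.

Unset Implicit Arguments.
Definition HypS (C : word -> word -> int) s := forall a b i, (i <= nlet s a)%N ->
  (i <= (nlet s b).+1)%N -> evl C (ann s i a) b = C a (cre s i b).

Section Steps.
Variables (C : word -> word -> int) (s : letter) (hs : HypS C s).
Set Implicit Arguments.

Lemma step_cons a b :
  (forall a' b', size a' + size b' < size a + size (s :: b) -> C a' b' = toZ (pairS s a' b')) ->
  C a (s :: b) = toZ (pairS s a (s :: b)).
Proof.
move=> IH; have := hs a b 0 (leq0n _) (leq0n _); rewrite /cre /= => <-.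
case: a IH => [|c a] IH /=; first by [].
rewrite pairS_cons /ann /=; case hc: (c == s) => /=.
  by rewrite IH //= !addSn addnS.
by [].
Qed.

Lemma step_dup a v i : 0 < i <= nlet s v -> i <= nlet s a ->
  (forall a' b', size a' + size b' < size a + size (dup_occ s i v) ->
     C a' b' = toZ (pairS s a' b')) ->
  C a (dup_occ s i v) = toZ (pairS s a (dup_occ s i v)).
Proof.
move=> hv ha IH.
have := hs a v i ha ltac:(lia).
have -> : cre s i v = dup_occ s i v.
  by rewrite /cre; case: eqP => [h|_]; [lia | rewrite (_ : (i <= _) = true) //; lia].
move=> <-.
have -> : ann s i a = Some (del_occ s i a).
  by rewrite /ann; case: eqP => [h|_]; [lia | rewrite (_ : (i <= _) = true) //; lia].
rewrite /= pairS_dup // IH // size_dup // size_del; last by lia.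
have : 0 < size a.
  have := @split_occ s i a ltac:(lia); move=> [u [r [-> _]]]; rewrite size_cat /=; lia.
lia.
Qed.

Lemma step_rcons a v : (nlet s v).+1 <= nlet s a ->
  (forall a' b', size a' + size b' < size a + size (rcons v s) ->
     C a' b' = toZ (pairS s a' b')) ->
  C a (rcons v s) = toZ (pairS s a (rcons v s)).
Proof.
move=> ha IH.
have := hs a v (nlet s v).+1 ha (leqnn _).
have -> : cre s (nlet s v).+1 v = rcons v s by rewrite /cre /= ltnn.
move=> <-.
have -> : ann s (nlet s v).+1 a = Some (del_occ s (nlet s v).+1 a).
  by rewrite /ann /= ha.
rewrite /= pairS_rcons // IH // size_rcons size_del; last by lia.
have : 0 < size a.
  have := @split_occ s (nlet s v).+1 a ltac:(lia); move=> [u [r [-> _]]]; rewrite size_cat /=; lia.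
lia.
Qed.

End Steps.

Lemma eqxxL (s : letter) : (s == s) = true. Proof. by case: s. Qed.

Lemma cnt s t w : t != s -> (forall u r, w <> u ++ s :: s :: r) ->
  nlet s w <= nlet t w + (last t w == s).
Proof.
move=> ht; elim/last_ind: w => [|w c IH] H.
  by rewrite /nlet /= (negbTE ht).
have IH' : nlet s w <= nlet t w + (last t w == s).
  apply: IH => u r E; apply: (H u (rcons r c)); by rewrite E rcons_cat.
rewrite -cats1 !nlet_cat !nlet_cons /nlet /= last_cat /=.
have [hcs|hcs] := eqVneq c s.
  subst c.
  have hl : (last t w == s) = false.
    apply/negbTE/negP; case/lastP: w {IH IH'} H => [|w c] H /=.
      by rewrite (negbTE ht).
    rewrite last_rcons => /eqP hc; subst c.
    by apply: (H w [::]); rewrite -!cats1 -catA.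
  rewrite hl in IH'; rewrite /nlet in IH'; have hst : (s == t) = false by clear -ht; move: ht; case: s; case: t.
  rewrite hst /=; move: IH' => /= IH'; lia.
have hct : c == t by clear -hcs ht; move: hcs ht; case: c; case: s; case: t.
rewrite hct /=; rewrite /nlet in IH'.
move: IH'; case: (last t w == s) => /=; lia.
Qed.


Lemma degE a b : (deg a == deg b) = (size a == size b) && (nlet lx a == nlet lx b).
Proof.
rewrite /deg xpair_eqE; case: eqP => //= hs.
have h1 := nlet_xy a; have h2 := nlet_xy b.
apply/eqP/eqP => h; lia.
Qed.

Lemma pairingE a b : pairing a b = toZ (pairS lx a b).
Proof. by rewrite /pairing /pairS degE -andbA. Qed.

Unset Implicit Arguments.
Local Open Scope ring_scope.

Theorem mainTheorem7 (B : word -> word -> int) :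
  (forall w0 w1 : word, deg w0 != deg w1 -> B w0 w1 = 0) ->
  (forall (w0 w1 : word) (i : nat), (i <= nlet lx w0)%N -> (i <= (nlet lx w1).+1)%N ->
     evl B (ann lx i w0) w1 = B w0 (cre lx i w1)) ->
  (forall (w0 w1 : word) (i : nat), (i <= nlet ly w1)%N -> (i <= (nlet ly w0).+1)%N ->
     evr B w0 (ann ly i w1) = B (cre ly i w0) w1) ->
  B [::] [::] = 1 ->
  forall w0 w1 : word, B w0 w1 = pairing w0 w1.
Proof.
move=> h1 hx hy h4.
suff H : forall N a b, (size a + size b < N)%N -> B a b = toZ (pairS lx a b).
  by move=> w0 w1; rewrite pairingE (H _ w0 w1 (ltnSn _)).
set C := fun a b => B b a.
have HB : HypS B lx by [].
have HC : HypS C ly.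
  move=> a b i ha hb; rewrite /C -(hy b a i ha hb).
  by case: (ann ly i a).
elim=> [//|N IH] w0 w1 hN.
have IHB : forall a b, (size a + size b < size w0 + size w1)%N -> B a b = toZ (pairS lx a b).
  move=> a b h; apply: IH; lia.
have IHC : forall a b, (size a + size b < size w1 + size w0)%N -> C a b = toZ (pairS ly a b).
  move=> a b h; rewrite /C -dual; apply: IH; lia.
case hd: (deg w0 == deg w1); last first.
  by rewrite h1 ?hd // /toZ /pairS andbA -degE hd.
move: hd; rewrite degE => /andP[/eqP hs /eqP hnx].
have hny : nlet ly w0 = nlet ly w1.
  have := nlet_xy w0; have := nlet_xy w1; lia.
case: (classic (exists u r, w1 = u ++ lx :: lx :: r)) => [[u [r Ew1]]|na].
  have E : w1 = dup_occ lx (nlet lx u).+1 (u ++ lx :: r) by rewrite dup_split.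
  rewrite E; apply: (step_dup HB); rewrite -?E //.
  - by rewrite nlet_cat nlet_cons /=; lia.
  - by rewrite hnx Ew1 !nlet_cat !nlet_cons /=; lia.
case: (classic (exists v, w1 = rcons v lx)) => [[v Ew1]|nb].
  rewrite Ew1; apply: (step_rcons HB); rewrite -?Ew1 //.
  by rewrite hnx Ew1 -cats1 nlet_cat /=; lia.
case: (classic (exists u r, w0 = u ++ ly :: ly :: r)) => [[u [r Ew0]]|nc].
  have E : w0 = dup_occ ly (nlet ly u).+1 (u ++ ly :: r) by rewrite dup_split.
  rewrite dual -[B _ _]/(C w1 w0) E; apply: (step_dup HC); rewrite -?E //.
  - by rewrite nlet_cat nlet_cons /=; lia.
  - by rewrite -hny Ew0 !nlet_cat !nlet_cons /=; lia.
case: (classic (exists v, w0 = rcons v ly)) => [[v Ew0]|nd].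
  rewrite dual -[B _ _]/(C w1 w0) Ew0; apply: (step_rcons HC); rewrite -?Ew0 //.
  by rewrite -hny Ew0 -cats1 nlet_cat /=; lia.
clear hN IH.
case: w1 hs hnx hny IHB IHC na nb => [|c1 t1] hs hnx hny IHB IHC na nb.
  case: w0 hs {IHB IHC nc nd hnx hny} => [|c0 t0] hs //; by rewrite h4.
case: c1 hs hnx hny IHB IHC na nb => hs hnx hny IHB IHC na nb.
  case: w0 hs hnx hny IHB IHC nc nd => [|c0 t0] hs hnx hny IHB IHC nc nd //.
  case: c0 hs hnx hny IHB IHC nc nd => hs hnx hny IHB IHC nc nd.
    rewrite dual -[B _ _]/(C _ _); apply: (step_cons HC) => a b h.
    apply: IHC; move: h => /=; lia.
  (* hard case: w0 = x t0, w1 = y t1 *)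
  exfalso.
  have c0 := @cnt ly lx t0 isT.
  have c1 := @cnt lx ly (true :: t1) isT.
  have H0 : (nlet ly t0 <= nlet lx t0)%N.
    have hl : (last lx t0 == ly) = false.
      apply/negbTE/negP => /eqP hl; apply: nd; exists (belast lx t0).
      by rewrite lastI hl.
    have := c0 (fun u r E => nc (ex_intro _ (lx :: u) (ex_intro _ r (f_equal (cons lx) E)))).
    by rewrite hl addn0.
  have H1 : (nlet lx (true :: t1) <= nlet ly (true :: t1))%N.
    have hl : (last ly (true :: t1) == lx) = false.
      apply/negbTE/negP => /eqP hl; apply: nb; exists (belast ly t1).
      by rewrite lastI -hl.
    have := c1 (fun u r E => na (ex_intro _ u (ex_intro _ r E))).
    by rewrite hl addn0.
  move: hnx hny H1; rewrite !nlet_cons /=; lia.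
apply: (step_cons HB) => a b h; apply: IHB; move: h => /=; lia.
Qed.
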